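(* For $p=2$: $\nu_2((2^4))\ge 4$ and $\nu_2((3^4))\ge 5$.
   Context: $(y^k)$ denotes the partition with $k$ parts equal to $y$. For $\lambda\vdash n$, $S^\lambda_{\mathbb Z}$ is the integral Specht module spanned by polytabloids $e_t$ in the permutation module on $\lambda$-tabloids, which has the bilinear form making tabloids orthonormal. The $p$-Schaper number $\nu_p(\lambda)$ is the least $k$ such that $\overline{S^\lambda_k}/\overline{S^\lambda_{k+1}}\ne 0$, where $S^\lambda_i=\{x\in S^\lambda_{\mathbb Z}:p^i\mid\langle x,y\rangle\ \forall y\}$ and the bar is reduction mod $p$; equivalently, the largest $k$ with $p^k\mid\langle e_s,e_t\rangle$ for all $\lambda$-tableaux $s,t$. *)

(* Defs.v *)
From mathcomp Require Import all_boot all_order all_fingroup all_algebra.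
Unset Printing Implicit Defensive.
Import GRing.Theory Num.Theory.

(* A partition lam is a seq nat (weakly decreasing positive parts), n = sumn lam.
   Boxes of the Young diagram are numbered 0..n-1 in reading order (row by row).
   A lam-tableau is a bijection boxes -> entries {0..n-1}, i.e. s : 'S_n, with
   entry s b in box b. *)

Definition box_row (lam : seq nat) (i : nat) : nat :=
  count (fun r => sumn (take r.+1 lam) <= i) (iota 0 (size lam)).

Definition box_col (lam : seq nat) (i : nat) : nat :=
  i - sumn (take (box_row lam i) lam).

(* Row-assignment functions entry -> row; the lam-tabloids are those with
   row r of size lam_r. *)
Definition rowfun (lam : seq nat) := {ffun 'I_(sumn lam) -> 'I_(sumn lam).+1}.

Definition is_tabloid (lam : seq nat) (T : rowfun lam) : bool :=
  [forall r : 'I_(sumn lam).+1, #|[set j | T j == r]| == nth 0 lam r].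

Definition tabloid_of (lam : seq nat) (s : 'S_(sumn lam)) : rowfun lam :=
  [ffun j => inord (box_row lam ((s^-1)%g j))].

Definition col_stab (lam : seq nat) (s pi : 'S_(sumn lam)) : bool :=
  [forall j, box_col lam ((s^-1)%g (pi j)) == box_col lam ((s^-1)%g j)].

(* polytabloid e_s = sum_{pi in C_s} sgn(pi) {pi s}, as an element of the
   integral permutation module (coefficient function on tabloids).
   Note (s * pi)%g is the tableau b |-> pi (s b). *)
Definition polytabloid (lam : seq nat) (s : 'S_(sumn lam)) (T : rowfun lam) : int :=
  (\sum_(pi : 'S_(sumn lam) | col_stab lam s pi)
     (-1) ^+ odd_perm pi * ((tabloid_of lam (s * pi)%g == T)%:R))%R.

Definition tab_form (lam : seq nat) (x y : rowfun lam -> int) : int :=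
  (\sum_(T : rowfun lam | is_tabloid lam T) x T * y T)%R.

Definition gram (lam : seq nat) (s t : 'S_(sumn lam)) : int :=
  tab_form lam (polytabloid lam s) (polytabloid lam t).

(* p-Schaper number: the largest k with p^k | <e_s, e_t> for all tableaux s, t.
   The bound is harmless: <e_s,e_s> = |C_s| > 0, so for p >= 2 any such k is
   below the sum of all |<e_s,e_t>|. *)
Definition schaper_number (p : nat) (lam : seq nat) : nat :=
  \max_(k < (\sum_(s : 'S_(sumn lam)) \sum_(t : 'S_(sumn lam)) absz (gram lam s t)).+1
         | [forall s : 'S_(sumn lam), forall t : 'S_(sumn lam),
              ((p ^ k)%:Z %| gram lam s t)%Z]) k.

(* Main.v *)
Require Import Defs.
From mathcomp Require Import all_boot all_order all_fingroup all_algebra.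
From mathcomp Require Import zify ring.
Import GRing.Theory Num.Theory.
Local Open Scope group_scope.



Section Chain.
Variable T : finType.

Definition Fixs (A : {set T}) : {set {perm T}} := [set p : {perm T} | [forall x in A, p x == x]].

Lemma Fixs_group_set A : group_set (Fixs A).
Proof.
apply/group_setP; split; first by rewrite inE; apply/forall_inP => x _; rewrite perm1.
move=> p q; rewrite !inE => /forall_inP Hp /forall_inP Hq; apply/forall_inP => x xA.
by rewrite permM (eqP (Hp x xA)) (eqP (Hq x xA)).
Qed.
Canonical Fixs_group A := Group (Fixs_group_set A).

Lemma card_split (G : {group {perm T}}) (A : {set T}) :
  Sym A \subset G -> (forall p, p \in G -> forall x, (p x \in A) = (x \in A)) ->
  #|G| = (#|A|`! * #|G :&: Fixs A|)%N.
Proof.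
move=> sSG stG.
have TI : Sym A :&: (G :&: Fixs A) = 1%g.
  apply/trivgP/subsetP => p; rewrite !inE => /and3P[pA _ /forall_inP pF].
  apply/eqP/permP => x; rewrite perm1.
  case xA: (x \in A); first exact/eqP/pF.
  by apply: (out_perm pA); rewrite xA.
rewrite -card_Sym -TI_cardMg //; congr #|pred_of_set _|.
apply/eqP; rewrite eqEsubset; apply/andP; split; last first.
  by rewrite mulG_subG sSG subsetIl.
apply/subsetP => p Gp.
have pN : p \in ('N(A | 'P))%g.
  by apply/astabsP => x; rewrite /= stG.
set q := restr_perm A p.
have qA : q \in Sym A by rewrite inE restr_perm_on.
have Gq : q \in G by apply: (subsetP sSG).
rewrite -(mulKVg q p); apply: imset2_f => //.
rewrite !inE groupM ?groupV //=; apply/forall_inP => x xA.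
rewrite permM.
have qAx : q^-1 x \in A.
  have := perm_closed x (perm_onV (restr_perm_on A p)).
  by rewrite xA.
by rewrite -(restr_permE pN qAx) -/q permKV.
Qed.


Lemma chain (I : eqType) (r : seq I) (F : I -> {set T}) (G : {group {perm T}}) :
  uniq r -> {in r &, forall i j, i != j -> [disjoint F i & F j]} ->
  {in r, forall i, Sym (F i) \subset G} ->
  {in r, forall i, forall p, p \in G -> forall x, (p x \in F i) = (x \in F i)} ->
  (\prod_(i <- r) #|F i|`!) %| #|G|.
Proof.
elim: r G => [|i r IH] G /=; first by rewrite big_nil dvd1n.
move=> /andP[ir ur] dj sS st.
rewrite big_cons (card_split G (F i) (sS i (mem_head _ _)) (st i (mem_head _ _))).
rewrite dvdn_pmul2l ?fact_gt0 //.
apply: (IH (G :&: Fixs (F i))%G ur).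
- by move=> a b ar br; apply: dj; rewrite inE ?ar ?br orbT.
- move=> j jr; rewrite subsetI (sS j) ?inE ?jr ?orbT //=.
  apply/subsetP => p; rewrite !inE => pj; apply/forall_inP => x xi.
  apply/eqP/(out_perm pj).
  have ij : i != j by apply: contraNneq ir => ->.
  have jir : j \in i :: r by rewrite inE jr orbT.
  have := dj i j (mem_head _ _) jir ij.
  by move=> D; rewrite (disjointFr D xi).
- move=> j jr p /setIP[Gp _] x.
  have jir : j \in i :: r by rewrite inE jr orbT.
  exact: st j jir p Gp x.
Qed.
End Chain.

Section FreeDiv.
Local Open Scope ring_scope.
Lemma free_div (aT : finGroupType) (T : finType) (to : {action aT &-> T})
  (G : {group aT}) (w : T -> int) :
  (forall x a, a \in G -> w (to x a) = w x) ->
  (forall x a, a \in G -> to x a = x -> a = 1%g) ->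
  (#|G|%:Z %| \sum_(x : T) w x)%Z.
Proof.
move=> wI fr.
have actsT : [acts G, on [set: T] | to].
  by apply/actsP => a _ x; rewrite !inE.
rewrite (eq_bigl (fun x => x \in [set: T])); last by move=> x; rewrite inE.
rewrite (set_partition_big _ (orbit_partition actsT)).
apply: rpred_sum => _ /imsetP[x _ ->].
rewrite (eq_bigr (fun _ => w x)); last first.
  by move=> z /orbitP[a Ga <-]; rewrite wI.
rewrite sumr_const.
have -> : #|orbit to G x| = #|G|.
  rewrite -(card_orbit_stab to G x).
  suff -> : ('C_G[x | to])%g = 1%g by rewrite cards1 muln1.
  apply/trivgP/subsetP => a /setIP[Ga /astab1P Hx]; rewrite inE; apply/eqP.
  exact: (fr x a Ga Hx).
by rewrite -mulr_natr; apply: dvdz_mull; rewrite -natz dvdzz.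
Qed.
End FreeDiv.

Section Main.
Variable y : nat.
Hypothesis Hy : 0 < y.
Local Notation lam := (nseq 4 y).
Local Notation n := (sumn (nseq 4 y)).
Hypothesis Hrow : forall i, i < n -> box_row lam i = i %/ y.
Hypothesis Hcol : forall i, i < n -> box_col lam i = i %% y.
Hypothesis Hrowcnt : forall r, r <= n -> count (fun b => b %/ y == r) (iota 0 n) = nth 0 lam r.
Hypothesis Hcolcnt : forall u, u < y -> count (fun b => b %% y == u) (iota 0 n) = 4.

Lemma n4 : n = (4 * y)%N.
Proof. rewrite /=; lia. Qed.

Lemma card_count (P : pred nat) : #|[set b : 'I_n | P b]| = count P (iota 0 n).
Proof.
rewrite cardsE cardE /enum_mem size_filter -enumT -val_enum_ord count_map.
by apply: eq_count => b; rewrite !inE.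
Qed.

Definition scol (s : 'S_n) (j : 'I_n) : nat := (s^-1 j) %% y.
Definition sg (p : 'S_n) : int := ((-1) ^+ odd_perm p)%R.
Definition tb (u : 'S_n) := tabloid_of lam u.
Definition wt (s t : 'S_n) (x : 'S_n * 'S_n) : int :=
  ((col_stab lam s x.1 && col_stab lam t x.2 && (tb (s * x.1) == tb (t * x.2)))%:R
    * (sg x.1 * sg x.2))%R.

Lemma csP s (p : 'S_n) : reflect (forall j, scol s (p j) = scol s j) (col_stab lam s p).
Proof.
apply: (iffP forallP) => H j; last by rewrite !Hcol //; apply/eqP; exact: (H j).
by have := H j; rewrite !Hcol // => /eqP.
Qed.

Lemma tbE (u : 'S_n) j : tb u j = inord ((u^-1 j) %/ y).
Proof. by rewrite ffunE Hrow. Qed.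

Lemma div_le (b : 'I_n) : b %/ y <= n.
Proof. exact: leq_trans (leq_div _ _) (ltnW (ltn_ord _)). Qed.

Lemma inord_eq k l : k <= n -> l <= n -> (inord k == inord l :> 'I_n.+1) = (k == l).
Proof. by move=> hk hl; rewrite -val_eqE /= !inordK. Qed.

Lemma tb_eqP (u v : 'S_n) : reflect (forall j, (u^-1 j) %/ y = (v^-1 j) %/ y) (tb u == tb v).
Proof.
apply: (iffP eqP) => [E j | E].
  by move/ffunP: E => /(_ j); rewrite !tbE => /eqP; rewrite inord_eq ?div_le // => /eqP.
by apply/ffunP => j; rewrite !tbE E.
Qed.

Definition Cs (s : 'S_n) : {set 'S_n} := [set p | col_stab lam s p].
Lemma Cs_group_set s : group_set (Cs s).
Proof.
apply/group_setP; split; first by rewrite inE; apply/csP => j; rewrite perm1.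
move=> p q; rewrite !inE => /csP Hp /csP Hq; apply/csP => j.
by rewrite permM Hq Hp.
Qed.
Canonical Cs_group s := Group (Cs_group_set s).

Lemma is_tb (u : 'S_n) : is_tabloid lam (tb u).
Proof.
apply/forallP => r; apply/eqP.
rewrite -Hrowcnt; last by rewrite -ltnS.
rewrite -card_count.
rewrite -(card_imset [set b : 'I_n | b %/ y == r] (@perm_inj _ u)); apply: eq_card => j.
rewrite inE tbE -{2}(permKV u j) mem_imset ?inE; last exact: perm_inj.
by rewrite -{1}(inord_val r) inord_eq ?div_le ?leq_ord.
Qed.

Lemma gramE s t : gram lam s t = (\sum_(x : 'S_n * 'S_n) wt s t x)%R.
Proof.
rewrite /gram /tab_form /polytabloid.
under eq_bigr => T _ do rewrite big_distrlr.
rewrite exchange_big; under eq_bigr => p _ do rewrite exchange_big.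
rewrite pair_big /= [RHS](bigID (fun p => col_stab lam s p.1 && col_stab lam t p.2)) /=.
rewrite [X in _ = (_ + X)%R]big1 ?addr0; last first.
  by move=> p /negbTE Hp; rewrite /wt Hp /= mul0r.
apply: eq_bigr => [[p q]] /= /andP[Hp Hq].
rewrite (bigD1 (tb (s * p))) ?is_tb //= [X in (_ + X)%R]big1 ?addr0; last first.
  by move=> T /andP[_ /negbTE]; rewrite eq_sym -/(tb _) => ->; rewrite !mulr0 mul0r.
rewrite /wt Hp Hq /= -/(tb _) eqxx mulr1.
case: (tb (t * q) =P tb (s * p)) => [->|/eqP ne]; first by rewrite eqxx mulr1 mul1r.
by rewrite eq_sym (negbTE ne) !mulr0 mul0r.
Qed.

Definition Ac (s b : 'S_n) : 'S_n := (b^-1 ^ s).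
Definition actf (s t : 'S_n) (x h : 'S_n * 'S_n) : 'S_n * 'S_n :=
  (Ac s h.1 * x.1 * h.2, Ac t h.1 * x.2 * h.2).

Lemma Ac_apply s b j : Ac s b j = s (b^-1 (s^-1 j)).
Proof. by rewrite /Ac conjgE !permM. Qed.

Lemma actf1 s t : (actf s t)^~ 1 =1 id.
Proof.
by move=> [p q]; rewrite /actf /Ac /= invg1 !conj1g !mul1g !mulg1.
Qed.

Lemma actfM s t x : act_morph (actf s t) x.
Proof.
move=> [b1 k1] [b2 k2]; case: x => p q; rewrite /actf /Ac /=.
by rewrite !invMg !conjMg !mulgA.
Qed.

Definition actT s t := TotalAction (actf1 s t) (actfM s t).

Definition K s t := (Cs_group s :&: Cs_group t)%G.

Lemma sgM p q : sg (p * q) = (sg p * sg q)%R.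
Proof. by rewrite /sg odd_permM signr_addb. Qed.

Lemma sg_sq p : (sg p * sg p = 1)%R.
Proof. by rewrite /sg; case: (odd_perm p); rewrite /= ?expr0 ?expr1 ?mulrNN mulr1. Qed.

Lemma sgV p : sg p^-1 = sg p.
Proof. by rewrite /sg odd_permV. Qed.

Lemma inv_apply s b p k j :
  (s * (Ac s b * p * k))^-1 j = b ((s * p)^-1 (k^-1 j)).
Proof.
rewrite /Ac !conjgE !invMg !invgK !permM.
by rewrite permK.
Qed.

Lemma gram_dvd_gen s t (V : {group 'S_n}) :
  (forall v, v \in V -> forall b : 'I_n, (v b) %% y = b %% y) ->
  (forall v, v \in V -> forall b b' : 'I_n, ((v b) %/ y == (v b') %/ y) = (b %/ y == b' %/ y)) ->
  (forall v, v \in V -> v != 1 ->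
     (forall b, v b != b) /\ exists e, forall k, k \in K s t -> k e = e) ->
  ((#|V| * #|K s t|)%:Z %| gram lam s t)%Z.
Proof.
move=> HVc HVr HVf.
have AcC : forall u b, b \in V -> Ac u b \in Cs u.
  move=> u b Vb; rewrite inE; apply/csP => j.
  by rewrite /scol Ac_apply permK HVc // groupV.
rewrite gramE -cardsX.
apply: (@free_div _ _ (actT s t) (setX_group V (K s t))).
- move=> [p q] [b k] /setXP[Vb /setIP[Ks Kt]].
  rewrite /wt /= /actf /=.
  have E1 : (Ac s b * p * k \in Cs s) = (p \in Cs s) by rewrite groupMr // groupMl // AcC.
  have E2 : (Ac t b * q * k \in Cs t) = (q \in Cs t) by rewrite groupMr // groupMl // AcC.
  rewrite !inE in E1 E2; rewrite E1 E2.
  have E3 : (tb (s * (Ac s b * p * k)) == tb (t * (Ac t b * q * k))) = (tb (s * p) == tb (t * q)).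
    apply/tb_eqP/tb_eqP => H j.
      by have := H (k j); rewrite !inv_apply permK => /eqP; rewrite HVr // => /eqP.
    by rewrite !inv_apply; apply/eqP; rewrite HVr // H.
  rewrite E3; congr (_ * _)%R.
  rewrite !sgM !sgV.
  set a := sg s; set c := sg t; set d := sg b; set e := sg k.
  have -> : (a * (d * a) * sg p * e * (c * (d * c) * sg q * e) =
      (a * a) * (c * c) * (d * d) * (e * e) * (sg p * sg q))%R by ring.
  by rewrite !sg_sq !mul1r.
- move=> [p q] [b k] /setXP[Vb Kk] /= E.
  have E1 : Ac s b * p * k = p by case: E.
  case: (eqVneq b 1) => [b1 | bn1].
    move: E1; rewrite b1 /Ac invg1 conj1g mul1g => E1.
    have : p * k = p * 1 by rewrite mulg1.
    by move/mulgI => ->.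
  have [fpf [e He]] := HVf b Vb bn1.
  have := congr1 (fun f : 'S_n => f (p^-1 e)) E1.
  rewrite /= !permM permKV -{2}(He k Kk) => /perm_inj /(congr1 p^-1).
  rewrite permK.
  set z := s^-1 (p^-1 e).
  rewrite -{1}(permKV s (p^-1 e)) -/z => /perm_inj Hz.
  by have := fpf z; rewrite -{1}Hz permKV eqxx.
Qed.

Definition cell s t (uv : 'I_y * 'I_y) : {set 'I_n} :=
  [set j | (scol s j == uv.1) && (scol t j == uv.2)].

Lemma K_cell s t uv p x : p \in K s t -> (p x \in cell s t uv) = (x \in cell s t uv).
Proof. by move=> /setIP[]; rewrite !inE => /csP Hs /csP Ht; rewrite Hs Ht. Qed.

Lemma Sym_cell s t uv : Sym (cell s t uv) \subset K s t.
Proof.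
apply/subsetP => p; rewrite inE => pon.
have H : forall j, scol s (p j) = scol s j /\ scol t (p j) = scol t j.
  move=> j; case jc: (j \in cell s t uv); last by rewrite (out_perm pon) ?jc.
  have pj : p j \in cell s t uv by rewrite (perm_closed _ pon) jc.
  move: jc pj; rewrite !inE => /andP[/eqP -> /eqP ->] /andP[/eqP -> /eqP ->]; done.
by apply/setIP; split; rewrite inE; apply/csP => j; case: (H j).
Qed.

Lemma prod_cells s t : (\prod_(uv : 'I_y * 'I_y) #|cell s t uv|`!) %| #|K s t|.
Proof.
apply: chain.
- exact: index_enum_uniq.
- move=> a b _ _ ab; apply/pred0P => x /=; apply/negbTE/negP; rewrite !inE.
  move=> /andP[/andP[/eqP ha1 /eqP ha2] /andP[/eqP hb1 /eqP hb2]].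
  move: ab; case: a ha1 ha2 => a1 a2 /= ha1 ha2; case: b hb1 hb2 => b1 b2 /= hb1 hb2.
  have e1 : a1 = b1 by apply: ord_inj; rewrite -ha1 -hb1.
  have e2 : a2 = b2 by apply: ord_inj; rewrite -ha2 -hb2.
  by rewrite e1 e2 eqxx.
- by move=> uv _; apply: Sym_cell.
- by move=> uv _ p Kp x; apply: K_cell.
Qed.

Lemma sum_split (f g : 'I_n -> nat) (u : nat) : (forall j, g j < y) ->
  \sum_(v : 'I_y) #|[set j | (f j == u) && (g j == v)]| = #|[set j | f j == u]|.
Proof.
move=> gy.
rewrite -sum1_card.
transitivity (\sum_(v : 'I_y) \sum_(j in [set j | (f j == u) && (g j == v)]) 1)%N.
  by apply: eq_bigr => v _; rewrite sum1_card.
rewrite (exchange_big_dep (fun j => j \in [set j | f j == u])) /=; last first.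
  by move=> v j _; rewrite !inE => /andP[].
apply: eq_bigr => j; rewrite inE => fj.
rewrite (big_pred1 (Ordinal (gy j))) // => v /=.
by rewrite inE fj /= -val_eqE /= eq_sym.
Qed.

Lemma col_card s (u : 'I_y) : #|[set j | scol s j == u]| = 4.
Proof.
apply: etrans (Hcolcnt u (ltn_ord u)); rewrite -card_count.
rewrite -(card_imset [set b : 'I_n | b %% y == u] (@perm_inj _ s)); apply: eq_card => j.
by rewrite inE /scol -{2}(permKV s j) mem_imset ?inE //; exact: perm_inj.
Qed.

Lemma scol_lt s j : scol s j < y.
Proof. exact: ltn_pmod. Qed.

Lemma row_sum s t (u : 'I_y) : \sum_(v : 'I_y) #|cell s t (u, v)| = 4.
Proof. by rewrite (sum_split (scol s) (scol t) u (scol_lt t)) col_card. Qed.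

Lemma col_sum s t (v : 'I_y) : \sum_(u : 'I_y) #|cell s t (u, v)| = 4.
Proof.
apply: etrans _ (col_card t v); rewrite -(sum_split (scol t) (scol s) v (scol_lt s)).
apply: eq_bigr => u _; apply: eq_card => j; by rewrite !inE andbC.
Qed.

Lemma cell1 s t uv : #|cell s t uv| = 1%N -> exists e, forall k, k \in K s t -> k e = e.
Proof.
move=> /eqP /cards1P [e He]; exists e => k Kk.
have : k e \in cell s t uv by rewrite K_cell // He set11.
by rewrite He => /set1P.
Qed.

Lemma gram_self s : gram lam s s = Posz #|Cs s|.
Proof.
have key : forall p q, p \in Cs s -> q \in Cs s -> tb (s * p) == tb (s * q) -> p = q.
  move=> p q; rewrite !inE => /csP Hp /csP Hq /tb_eqP H.
  apply: invg_inj; apply/permP => j; apply: (@perm_inj _ s^-1); apply: ord_inj.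
  have h1 := H j; rewrite !invMg !permM in h1.
  have h2 : (s^-1 (p^-1 j)) %% y = (s^-1 (q^-1 j)) %% y.
    have E1 : scol s (p^-1 j) = scol s j by rewrite -{2}(permKV p j) Hp.
    have E2 : scol s (q^-1 j) = scol s j by rewrite -{2}(permKV q j) Hq.
    by move: E1 E2; rewrite /scol => -> ->.
  by rewrite (divn_eq (s^-1 (p^-1 j)) y) (divn_eq (s^-1 (q^-1 j)) y) h1 h2.
rewrite gramE (eq_bigr (fun x => (((x.1 \in Cs s) && (x.2 == x.1))%:R)%R)); last first.
  move=> [p q] _; rewrite /wt /= -!(in_set (col_stab lam s)) -/(Cs s).
  case Hp: (p \in Cs s); last by rewrite /= mul0r.
  case: (eqVneq q p) => [E | NE].
    by rewrite E Hp eqxx /= sg_sq mulr1.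
  case Hq: (q \in Cs s); last by rewrite /= mul0r.
  case Ht: (tb (s * p) == tb (s * q)); last by rewrite /= mul0r.
  by case/eqP: NE; symmetry; apply: key.
rewrite -(pair_bigA _ (fun p q => (((p \in Cs s) && (q == p))%:R)%R)) /=.
rewrite (eq_bigr (fun p => (((p \in Cs s) : nat)%:R)%R)); last first.
  move=> p _; rewrite (bigD1 p) //= eqxx andbT big1 ?addr0 // => q /negbTE ->.
  by rewrite andbF.
rewrite -natr_sum -sum1_card natz; congr Posz.
by rewrite [RHS]big_mkcond; apply: eq_bigr => p _; case: (p \in Cs s).
Qed.

Lemma idiv_lt4 (i : 'I_n) : i %/ y < 4.
Proof. by rewrite ltn_divLR // mulnC -n4 ltn_ord. Qed.

Definition bfun (a : nat) (i : 'I_n) : 'I_n := insubd i (((i %/ y + a) %% 4) * y + i %% y).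

Lemma bfun_val a i : (bfun a i : nat) = ((i %/ y + a) %% 4) * y + i %% y.
Proof.
rewrite val_insubd; case: ifP => // /negP [].
have h1 : (i %/ y + a) %% 4 < 4 := ltn_pmod _ (isT : 0 < 4).
have h2 : i %% y < y := ltn_pmod _ Hy.
have : (i %/ y + a) %% 4 * y + i %% y < 4 * y by nia.
by rewrite -n4.
Qed.

Lemma bfun_div a i : bfun a i %/ y = (i %/ y + a) %% 4.
Proof. by rewrite bfun_val divnMDl // (divn_small (ltn_pmod _ Hy)) addn0. Qed.

Lemma bfun_mod a i : bfun a i %% y = i %% y.
Proof. by rewrite bfun_val modnMDl modn_mod. Qed.

Lemma bfun_inj a : injective (bfun a).
Proof.
move=> i j E; apply: ord_inj.
have h1 : i %% y = j %% y by rewrite -(bfun_mod a i) E bfun_mod.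
have h2 : (i %/ y + a) %% 4 = (j %/ y + a) %% 4 by rewrite -!bfun_div E.
have h3 : i %/ y = j %/ y.
  move/eqP: h2; rewrite eqn_modDr !modn_small ?idiv_lt4 //; by move/eqP.
by rewrite (divn_eq i y) (divn_eq j y) h1 h3.
Qed.

Definition beta a : 'S_n := perm (bfun_inj a).

Lemma betaE a i : beta a i = bfun a i.
Proof. by rewrite permE. Qed.

Lemma betaM a b : beta a * beta b = beta (a + b).
Proof.
apply/permP => i; rewrite permM !betaE; apply: ord_inj.
by rewrite [LHS]bfun_val bfun_div bfun_mod bfun_val modnDml addnA.
Qed.

Lemma beta_mod4 a : beta (a %% 4) = beta a.
Proof. by apply/permP => i; rewrite !betaE; apply: ord_inj; rewrite !bfun_val modnDmr. Qed.

Lemma beta0 : beta 0 = 1.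
Proof.
apply/permP => i; rewrite perm1 betaE; apply: ord_inj.
by rewrite bfun_val addn0 modn_small ?idiv_lt4 // -divn_eq.
Qed.

Definition Vb : {set 'S_n} := [set beta a | a : 'I_4].

Lemma Vb_group_set : group_set Vb.
Proof.
apply/group_setP; split.
  by apply/imsetP; exists ord0 => //; rewrite beta0.
move=> _ _ /imsetP[a _ ->] /imsetP[b _ ->]; apply/imsetP.
by exists (Ordinal (ltn_pmod (a + b) (isT : 0 < 4))) => //=; rewrite betaM beta_mod4.
Qed.
Canonical Vb_group := Group Vb_group_set.

Lemma n_gt0 : 0 < n.
Proof. by rewrite n4 muln_gt0 Hy. Qed.

Lemma card_Vb : #|Vb| = 4.
Proof.
rewrite card_imset ?card_ord // => a b E.
have := congr1 (fun p : 'S_n => (p (Ordinal n_gt0) : nat)) E.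
rewrite /= !betaE !bfun_val div0n mod0n !add0n !addn0 !modn_small //.
by move/eqP; rewrite eqn_pmul2r // => /eqP /ord_inj.
Qed.

Lemma Vb_col v : v \in Vb -> forall b : 'I_n, (v b) %% y = b %% y.
Proof. by case/imsetP => a _ -> b; rewrite betaE bfun_mod. Qed.

Lemma Vb_row v : v \in Vb -> forall b b' : 'I_n, ((v b) %/ y == (v b') %/ y) = (b %/ y == b' %/ y).
Proof.
case/imsetP => a _ -> b b'; rewrite !betaE !bfun_div.
by rewrite eqn_modDr !modn_small ?idiv_lt4.
Qed.

Lemma Vb_fpf v : v \in Vb -> v != 1 -> forall b, v b != b.
Proof.
case/imsetP => a _ -> na1 b; apply/negP => /eqP E.
move/negP: na1; apply; apply/eqP.
have h : (b %/ y + a) %% 4 = (b %/ y + 0) %% 4.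
  by rewrite addn0 (modn_small (idiv_lt4 b)) -bfun_div -betaE E.
move/eqP: h; rewrite eqn_modDl mod0n modn_small // => /eqP a0.
by rewrite a0 beta0.
Qed.

Lemma gram_dvd_pow s t k :
  (2 ^ k.+2 %| \prod_(uv : 'I_y * 'I_y) #|cell s t uv|`!) \/
  (2 ^ k %| \prod_(uv : 'I_y * 'I_y) #|cell s t uv|`! /\ exists uv, #|cell s t uv| = 1%N) ->
  ((Posz (2 ^ k.+2)) %| gram lam s t)%Z.
Proof.
case=> [H | [H [uv Huv]]].
  have V1 : forall v : 'S_n, v \in (1%G : {group 'S_n}) -> v = 1.
    by move=> v; rewrite inE => /eqP.
  have G := @gram_dvd_gen s t 1%G.
  rewrite cards1 mul1n in G; apply: dvdz_trans (G _ _ _).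
  - exact: (dvdn_trans H (prod_cells s t)).
  - by move=> v /V1 -> b; rewrite perm1.
  - by move=> v /V1 -> b b'; rewrite !perm1.
  - by move=> v /V1 ->; rewrite eqxx.
have := @gram_dvd_gen s t Vb_group.
rewrite card_Vb => G; apply: dvdz_trans (G Vb_col Vb_row _).
  by have := dvdn_mul (dvdnn 4) (dvdn_trans H (prod_cells s t)); rewrite !expnS mulnA.
move=> v Vv v1; split; first exact: Vb_fpf.
exact: cell1 Huv.
Qed.

End Main.
Local Close Scope group_scope.

Lemma schaper_lb (lam : seq nat) (k : nat) :
  (forall s t, ((Posz (2 ^ k)) %| gram lam s t)%Z) -> gram lam 1%g 1%g != 0%R ->
  k <= schaper_number 2 lam.
Proof.
move=> Hd Hnz.
set B := (\sum_(s : 'S_(sumn lam)) \sum_(t : 'S_(sumn lam)) absz (gram lam s t))%N.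
have Hg : 2 ^ k <= absz (gram lam 1%g 1%g).
  apply: dvdn_leq; first by rewrite absz_gt0.
  exact: (Hd 1%g 1%g).
have HB : absz (gram lam 1%g 1%g) <= B.
  rewrite /B (bigD1 1%g) //= (bigD1 1%g) //= -addnA; exact: leq_addr.
have hk : k < B.+1.
  apply: leq_trans (ltn_expl k (isT : 1 < 2)) _.
  by apply: leq_trans Hg _; apply: leq_trans HB _.
rewrite /schaper_number -/B.
apply: leq_trans (@leq_bigmax_cond _ _ (fun i : 'I_B.+1 => nat_of_ord i) (Ordinal hk) _) => //.
by apply/forallP => s; apply/forallP => t; exact: Hd.
Qed.

Lemma comb2n a b c d : a + b = 4 -> c + d = 4 -> a + c = 4 -> b + d = 4 ->
  (2 ^ 4 %| a`! * b`! * c`! * d`!) \/ (2 ^ 2 %| a`! * b`! * c`! * d`! /\ [|| a == 1, b == 1, c == 1 | d == 1]).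
Proof.
move=> h1 h2 h3 h4.
have -> : b = 4 - a by lia.
have -> : c = 4 - a by lia.
have -> : d = a by lia.
have : a < 5 by lia.
move: a {h1 h2 h3 h4}; do 5 (case; first by [left|right]); done.
Qed.

Definition cond3 (a b c d e f g h i : nat) : bool :=
  let P := a`! * b`! * c`! * d`! * e`! * f`! * g`! * h`! * i`! in
  (2 ^ 5 %| P) || ((2 ^ 3 %| P) &&
     [|| a == 1, b == 1, c == 1, d == 1, e == 1, f == 1, g == 1, h == 1 | i == 1]).

Definition chk3 : bool :=
  all (fun a => all (fun b => all (fun d => all (fun e =>
   let c := 4 - a - b in let f := 4 - d - e in let g := 4 - a - d in
   let h := 4 - b - e in let i := 4 - c - f in
   (a + b <= 4) ==> (d + e <= 4) ==> (a + d <= 4) ==> (b + e <= 4) ==>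
   (c + f <= 4) ==> (g + h + i == 4) ==> cond3 a b c d e f g h i)
   (iota 0 5)) (iota 0 5)) (iota 0 5)) (iota 0 5).

Lemma chk3_ok : chk3.
Proof. vm_compute. reflexivity. Qed.

Lemma comb3n a b c d e f g h i :
  a + b + c = 4 -> d + e + f = 4 -> g + h + i = 4 ->
  a + d + g = 4 -> b + e + h = 4 -> c + f + i = 4 -> cond3 a b c d e f g h i.
Proof.
move=> h1 h2 h3 h4 h5 h6.
have := chk3_ok; rewrite /chk3.
have m5 : forall x, x <= 4 -> x \in iota 0 5 by move=> x hx; rewrite mem_iota; lia.
have ha : a <= 4 by lia.
have hb : b <= 4 by lia.
have hd : d <= 4 by lia.
have he : e <= 4 by lia.
move=> H0.
have H1 := allP H0 a (m5 a ha).
have H2 := allP H1 b (m5 b hb).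
have H3 := allP H2 d (m5 d hd).
have := allP H3 e (m5 e he); rewrite /=.
have -> : 4 - a - b = c by lia.
have -> : 4 - d - e = f by lia.
have -> : 4 - a - d = g by lia.
have -> : 4 - b - e = h by lia.
have -> : 4 - c - f = i by lia.
have -> : a + b <= 4 by lia.
have -> : d + e <= 4 by lia.
have -> : a + d <= 4 by lia.
have -> : b + e <= 4 by lia.
have -> : c + f <= 4 by lia.
by rewrite h3.
Qed.

Lemma comb2 (m : 'I_2 * 'I_2 -> nat) :
  (forall u : 'I_2, \sum_(v < 2) m (u, v) = 4) -> (forall v : 'I_2, \sum_(u < 2) m (u, v) = 4) ->
  2 ^ 4 %| \prod_(uv : 'I_2 * 'I_2) (m uv)`! \/
  (2 ^ 2 %| \prod_(uv : 'I_2 * 'I_2) (m uv)`! /\ exists uv, m uv = 1).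
Proof.
move=> R C.
have r0 := R ord0; have r1 := R (lift ord0 ord0).
have c0 := C ord0; have c1 := C (lift ord0 ord0).
rewrite !big_ord_recl !big_ord0 !addn0 in r0 r1 c0 c1.
rewrite (eq_bigr (fun uv => (m (uv.1, uv.2))`!)); last by case.
rewrite -(pair_bigA _ (fun u v => (m (u, v))`!)) !big_ord_recl !big_ord0 /= !muln1 !mulnA.
case: (comb2n _ _ _ _ r0 r1 c0 c1) => [H|[H E]]; [left | right] => //; split => //.
by case/or4P: E => /eqP E; eexists; exact: E.
Qed.

Lemma comb3 (m : 'I_3 * 'I_3 -> nat) :
  (forall u : 'I_3, \sum_(v < 3) m (u, v) = 4) -> (forall v : 'I_3, \sum_(u < 3) m (u, v) = 4) ->
  2 ^ 5 %| \prod_(uv : 'I_3 * 'I_3) (m uv)`! \/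
  (2 ^ 3 %| \prod_(uv : 'I_3 * 'I_3) (m uv)`! /\ exists uv, m uv = 1).
Proof.
move=> R C.
have r0 := R ord0; have r1 := R (lift ord0 ord0); have r2 := R (lift ord0 (lift ord0 ord0)).
have c0 := C ord0; have c1 := C (lift ord0 ord0); have c2 := C (lift ord0 (lift ord0 ord0)).
rewrite !big_ord_recl !big_ord0 !addn0 !addnA in r0 r1 r2 c0 c1 c2.
rewrite (eq_bigr (fun uv => (m (uv.1, uv.2))`!)); last by case.
rewrite -(pair_bigA _ (fun u v => (m (u, v))`!)) !big_ord_recl !big_ord0 /= !muln1 !mulnA.
have := comb3n _ _ _ _ _ _ _ _ _ r0 r1 r2 c0 c1 c2; rewrite /cond3 /=.
case/orP => [H|/andP[H E]]; [left | right] => //; split => //.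
by repeat (case/orP: E => [/eqP E|E]; first by eexists; exact: E); move/eqP: E => E; eexists; exact: E.
Qed.

Lemma all_iota_P (P : nat -> bool) m : all P (iota 0 m) -> forall i, i < m -> P i.
Proof. by move=> /allP H i hi; apply: H; rewrite mem_iota. Qed.

Lemma row2 : forall i, i < sumn (nseq 4 2) -> box_row (nseq 4 2) i = i %/ 2.
Proof.
have H : all (fun i => box_row (nseq 4 2) i == i %/ 2) (iota 0 (sumn (nseq 4 2))) by vm_compute.
by move=> i hi; apply/eqP; exact: (all_iota_P _ _ H i hi).
Qed.
Lemma col2 : forall i, i < sumn (nseq 4 2) -> box_col (nseq 4 2) i = i %% 2.
Proof.
have H : all (fun i => box_col (nseq 4 2) i == i %% 2) (iota 0 (sumn (nseq 4 2))) by vm_compute.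
by move=> i hi; apply/eqP; exact: (all_iota_P _ _ H i hi).
Qed.
Lemma rowcnt2 : forall r, r <= sumn (nseq 4 2) ->
  count (fun b => b %/ 2 == r) (iota 0 (sumn (nseq 4 2))) = nth 0 (nseq 4 2) r.
Proof.
have H : all (fun r => count (fun b => b %/ 2 == r) (iota 0 (sumn (nseq 4 2))) == nth 0 (nseq 4 2) r)
  (iota 0 (sumn (nseq 4 2)).+1) by vm_compute.
by move=> r hr; apply/eqP; exact: (all_iota_P _ _ H r hr).
Qed.
Lemma colcnt2 : forall u, u < 2 -> count (fun b => b %% 2 == u) (iota 0 (sumn (nseq 4 2))) = 4.
Proof.
have H : all (fun u => count (fun b => b %% 2 == u) (iota 0 (sumn (nseq 4 2))) == 4) (iota 0 2) by vm_compute.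
by move=> u hu; apply/eqP; exact: (all_iota_P _ _ H u hu).
Qed.

Lemma row3 : forall i, i < sumn (nseq 4 3) -> box_row (nseq 4 3) i = i %/ 3.
Proof.
have H : all (fun i => box_row (nseq 4 3) i == i %/ 3) (iota 0 (sumn (nseq 4 3))) by vm_compute.
by move=> i hi; apply/eqP; exact: (all_iota_P _ _ H i hi).
Qed.
Lemma col3 : forall i, i < sumn (nseq 4 3) -> box_col (nseq 4 3) i = i %% 3.
Proof.
have H : all (fun i => box_col (nseq 4 3) i == i %% 3) (iota 0 (sumn (nseq 4 3))) by vm_compute.
by move=> i hi; apply/eqP; exact: (all_iota_P _ _ H i hi).
Qed.
Lemma rowcnt3 : forall r, r <= sumn (nseq 4 3) ->
  count (fun b => b %/ 3 == r) (iota 0 (sumn (nseq 4 3))) = nth 0 (nseq 4 3) r.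
Proof.
have H : all (fun r => count (fun b => b %/ 3 == r) (iota 0 (sumn (nseq 4 3))) == nth 0 (nseq 4 3) r)
  (iota 0 (sumn (nseq 4 3)).+1) by vm_compute.
by move=> r hr; apply/eqP; exact: (all_iota_P _ _ H r hr).
Qed.
Lemma colcnt3 : forall u, u < 3 -> count (fun b => b %% 3 == u) (iota 0 (sumn (nseq 4 3))) = 4.
Proof.
have H : all (fun u => count (fun b => b %% 3 == u) (iota 0 (sumn (nseq 4 3))) == 4) (iota 0 3) by vm_compute.
by move=> u hu; apply/eqP; exact: (all_iota_P _ _ H u hu).
Qed.

Lemma div2 s t : (Posz (2 ^ 4) %| gram (nseq 4%N 2%N) s t)%Z.
Proof.
apply: (gram_dvd_pow 2 isT row2 col2 rowcnt2 s t 2).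
exact: (comb2 (fun uv => #|cell 2 s t uv|) (row_sum 2 isT colcnt2 s t) (col_sum 2 isT colcnt2 s t)).
Qed.

Lemma div3 s t : (Posz (2 ^ 5) %| gram (nseq 4%N 3%N) s t)%Z.
Proof.
apply: (gram_dvd_pow 3 isT row3 col3 rowcnt3 s t 3).
exact: (comb3 (fun uv => #|cell 3 s t uv|) (row_sum 3 isT colcnt3 s t) (col_sum 3 isT colcnt3 s t)).
Qed.

Lemma nz2 : gram (nseq 4 2) 1%g 1%g != 0%R.
Proof.
rewrite (gram_self 2 row2 col2 rowcnt2).
have := cardG_gt0 (Cs_group 2 col2 1%g).
by case: #|_|.
Qed.

Lemma nz3 : gram (nseq 4 3) 1%g 1%g != 0%R.
Proof.
rewrite (gram_self 3 row3 col3 rowcnt3).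
have := cardG_gt0 (Cs_group 3 col3 1%g).
by case: #|_|.
Qed.

Theorem mainTheorem5 :
  4 <= schaper_number 2 (nseq 4 2) /\ 5 <= schaper_number 2 (nseq 4 3).
Proof.
split; apply: schaper_lb.
- exact: div2.
- exact: nz2.
- exact: div3.
- exact: nz3.
Qed.
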